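(* For every integer $s$, $$\sum_{k=1}^\infty\frac{L_{2k+s}}{4^k(2k-1)(2k)(2k+1)}=-L_s\ln 2+\frac5{16}L_{s+1}\ln 5+\frac{\sqrt5}{8}(15F_{s-1}-F_s)\ln\alpha-\frac{L_s}{2},$$ $$\sum_{k=1}^\infty\frac{F_{2k+s}}{4^k(2k-1)(2k)(2k+1)}=-F_s\ln 2+\frac5{16}F_{s+1}\ln 5+\frac{1}{8\sqrt5}(15L_{s-1}-L_s)\ln\alpha-\frac{F_s}{2}.$$
   Context: $F_n$ and $L_n$ are the Fibonacci and Lucas numbers for $n\in\mathbb Z$: $F_n=(\alpha^n-\beta^n)/(\alpha-\beta)$, $L_n=\alpha^n+\beta^n$, where $\alpha=(1+\sqrt5)/2$, $\beta=(1-\sqrt5)/2$. *)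

(* Defs.v *)
From Stdlib Require Import Reals.
From Coquelicot Require Import Coquelicot.
Open Scope R_scope.

Definition alpha : R := (1 + sqrt 5) / 2.
Definition beta : R := (1 - sqrt 5) / 2.

Definition Fib (n : Z) : R := (powerRZ alpha n - powerRZ beta n) / (alpha - beta).
Definition Luc (n : Z) : R := powerRZ alpha n + powerRZ beta n.

Definition den (k : nat) : R :=
  4 ^ k * ((2 * INR k - 1) * (2 * INR k) * (2 * INR k + 1)).

(* Main.v *)
Require Import Defs.
From Stdlib Require Import Reals.
From Coquelicot Require Import Coquelicot.
From Stdlib Require Import Lra Lia.
From Stdlib Require Import Reals.Nsatz.
Open Scope R_scope.

Fixpoint Ls (M:nat) (x:R) : R := match M with 0%nat => 0 | S m => Ls m x + x^(S m)/INR (S m) end.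
Fixpoint Gs (M:nat) (x:R) : R := match M with 0%nat => 0 | S m => Gs m x + x^m end.

Lemma Ls_deriv : forall M t, derivable_pt_lim (Ls M) t (Gs M t).
Proof.
  induction M as [|m IH]; intros t; simpl.
  - apply derivable_pt_lim_const.
  - apply (derivable_pt_lim_plus (Ls m) (fun x => x ^ S m / INR (S m))).
    + apply IH.
    + replace (t ^ m) with ((INR (S m) * t ^ (pred (S m))) * / INR (S m)).
      * apply (derivable_pt_lim_scal_right (fun x => x ^ S m)). apply derivable_pt_lim_pow.
      * simpl pred. field. apply not_0_INR. lia.
Qed.

Lemma Gs_eq : forall M t, Gs M t * (1 - t) = 1 - t ^ M.
Proof. induction M; intros t; simpl. ring. rewrite Rmult_plus_distr_r, IHM. ring. Qed.

Lemma h_deriv : forall M t, t < 1 ->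
  derivable_pt_lim (fun u => Ls M u + ln (1 - u)) t (- t ^ M / (1 - t)).
Proof.
  intros M t Ht.
  replace (- t ^ M / (1 - t)) with (Gs M t + (/ (1 - t)) * (0 - 1)).
  2:{ assert (E := Gs_eq M t). apply (Rmult_eq_reg_r (1 - t)); [|lra]. rewrite Rmult_plus_distr_r, E. field. lra. }
  apply (derivable_pt_lim_plus (Ls M) (fun u => ln (1 - u))).
  - apply Ls_deriv.
  - apply (derivable_pt_lim_comp (fun u => 1 - u) ln).
    + apply (derivable_pt_lim_minus (fun _ => 1) id). apply derivable_pt_lim_const. apply derivable_pt_lim_id.
    + apply derivable_pt_lim_ln. lra.
Qed.

Lemma log_bound : forall M x, Rabs x < 1 ->
  Rabs (Ls M x + ln (1 - x)) <= Rabs x ^ M * Rabs x / (1 - Rabs x).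
Proof.
  intros M x Hx.
  destruct (MVT_abs (fun u => Ls M u + ln (1 - u)) (fun t => - t ^ M / (1 - t)) 0 x) as [c [Hc Hcr]].
  { intros c Hc. apply h_deriv. unfold Rmin, Rmax in Hc. destruct (Rle_dec 0 x); apply Rabs_def2 in Hx; lra. }
  assert (Hc' : Rabs c <= Rabs x).
  { unfold Rmin, Rmax in Hcr. destruct (Rle_dec 0 x); unfold Rabs; destruct (Rcase_abs c), (Rcase_abs x); lra. }
  assert (L0 : Ls M 0 + ln (1 - 0) = 0). { clear. rewrite Rminus_0_r, ln_1, Rplus_0_r. induction M; [reflexivity|]. simpl Ls. rewrite IHM. simpl pow. unfold Rdiv. ring. }
  rewrite L0, Rminus_0_r, Rminus_0_r in Hc.
  rewrite Hc. unfold Rdiv. rewrite ?Rabs_mult, ?Rabs_Ropp, ?Rabs_inv, <- ?RPow_abs. idtac.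
  assert (Hcl : Rabs c < 1) by lra.
  assert (H1 : 0 < 1 - Rabs x) by lra.
  assert (H2 : 1 - Rabs x <= Rabs (1 - c)).
  { pose proof (Rle_abs c). apply Rabs_def2 in Hcl. unfold Rabs at 2. destruct (Rcase_abs (1 - c)); lra. }
  assert (H3 : Rabs c ^ M <= Rabs x ^ M). { apply pow_incr. split; [apply Rabs_pos|exact Hc']. }
  assert (H4 : / Rabs (1 - c) <= / (1 - Rabs x)). { apply Rinv_le_contravar; lra. }
  assert (0 <= Rabs c ^ M) by (apply pow_le, Rabs_pos).
  assert (0 <= / Rabs (1 - c)) by (apply Rlt_le, Rinv_0_lt_compat; lra).
  assert (0 <= Rabs x) by apply Rabs_pos.
  rewrite (Rmult_comm (Rabs x ^ M * Rabs x)).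
  replace (Rabs x ^ M * Rabs x * / (1 - Rabs x)) with (Rabs x ^ M * / (1 - Rabs x) * Rabs x) by ring.
  idtac.
  replace (/ (1 - Rabs x) * (Rabs x ^ M * Rabs x)) with (Rabs x ^ M * / (1 - Rabs x) * Rabs x) by ring.
  apply Rmult_le_compat_r; [assumption|].
  apply Rmult_le_compat; assumption.
Qed.

Lemma Ls_lim : forall x, Rabs x < 1 -> is_lim_seq (fun N => Ls (2*N) x) (- ln (1 - x)).
Proof.
  intros x Hx.
  set (K := Rabs x / (1 - Rabs x)).
  assert (Hg : is_lim_seq (fun N => (x^2)^N) 0).
  { apply is_lim_seq_geom. rewrite <- RPow_abs. pose proof (Rabs_pos x).
    replace (Rabs x ^ 2) with (Rabs x * Rabs x) by ring.
    rewrite ?Rabs_mult, ?Rabs_Rabsolu; try apply Rabs_def1; nra. }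
  assert (Hb : forall N, Rabs (Ls (2*N) x + ln (1 - x)) <= (x^2)^N * K).
  { intros N. replace ((x^2)^N) with (Rabs x ^ (2*N)) by (rewrite pow_mult, pow2_abs; reflexivity).
    pose proof (log_bound (2*N) x Hx). unfold K. unfold Rdiv in *. rewrite <- Rmult_assoc. exact H. }
  apply is_lim_seq_le_le with (u := fun N => - ln (1 - x) - (x^2)^N * K) (w := fun N => - ln (1 - x) + (x^2)^N * K).
  - intros N. specialize (Hb N). apply Rabs_le_between in Hb. lra.
  - pose proof (is_lim_seq_minus' _ _ _ _ (is_lim_seq_const (- ln (1 - x))) (is_lim_seq_scal_r _ K _ Hg)) as H.
    rewrite Rmult_0_l, Rminus_0_r in H. exact H.
  - pose proof (is_lim_seq_plus' _ _ _ _ (is_lim_seq_const (- ln (1 - x))) (is_lim_seq_scal_r _ K _ Hg)) as H.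
    rewrite Rmult_0_l, Rplus_0_r in H. exact H.
Qed.

Definition cden (k : nat) : R := (2 * INR k - 1) * (2 * INR k) * (2 * INR k + 1).

Fixpoint Ps (x:R) (N:nat) : R := match N with 0%nat => 0 | S n => Ps x n + x^(2 * S n) / cden (S n) end.

Lemma Ps_eq : forall x N, x <> 0 ->
  Ps x N = / 2 * ((x + / x) * (Ls (2*N) x - Ls (2*N) (-x)) / 2 - (Ls (2*N) x + Ls (2*N) (-x))
                  + x^(2*N) / (2 * INR N + 1) - 1).
Proof.
  intros x N Hx. induction N as [|n IH].
  - simpl. field. exact Hx.
  - cbn [Ps]. rewrite IH.
    replace (2 * S n)%nat with (S (S (2*n))) by lia.
    cbn [Ls]. unfold cden.
    assert (E : (-x)^(2*n) = x^(2*n)) by (rewrite !pow_mult; f_equal; ring).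
    cbn [pow]. rewrite E.
    set (y := x^(2*n)).
    rewrite !S_INR, !mult_INR. simpl (INR 2).
    pose proof (pos_INR n).
    field. repeat split; lra.
Qed.

Lemma sl : forall (u : nat -> R) (a l : R), is_lim_seq u l -> is_lim_seq (fun n => a * u n) (a * l).
Proof. intros u a l H. apply (is_lim_seq_mult' _ _ _ _ (is_lim_seq_const a) H). Qed.
Lemma sr : forall (u : nat -> R) (a l : R), is_lim_seq u l -> is_lim_seq (fun n => u n * a) (l * a).
Proof. intros u a l H. apply (is_lim_seq_mult' _ _ _ _ H (is_lim_seq_const a)). Qed.

Lemma comb_lim : forall (u v w : nat -> R) (a b c : R),
  is_lim_seq u a -> is_lim_seq v b -> is_lim_seq w 0 ->
  is_lim_seq (fun N => / 2 * (c * (u N - v N) / 2 - (u N + v N) + w N - 1))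
    (/ 2 * (c * (a - b) / 2 - (a + b) + 0 - 1)).
Proof.
  intros u v w a b c Hu Hv Hw.
  apply sl.
  apply (is_lim_seq_minus' _ (fun _ => 1)); [|apply is_lim_seq_const].
  apply is_lim_seq_plus'; [|exact Hw].
  apply is_lim_seq_minus'.
  - unfold Rdiv. apply sr. apply sl. apply is_lim_seq_minus'; assumption.
  - apply is_lim_seq_plus'; assumption.
Qed.

Lemma w_lim : forall x, Rabs x < 1 -> is_lim_seq (fun N => x^(2*N) / (2 * INR N + 1)) 0.
Proof.
  intros x Hx.
  assert (Hg : is_lim_seq (fun N => (x^2)^N) 0).
  { apply is_lim_seq_geom. rewrite <- RPow_abs. pose proof (Rabs_pos x).
    replace (Rabs x ^ 2) with (Rabs x * Rabs x) by ring.
    rewrite ?Rabs_mult, ?Rabs_Rabsolu; try apply Rabs_def1; nra. }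
  apply is_lim_seq_le_le with (u := fun _ => 0) (w := fun N => (x^2)^N).
  - intros N. rewrite pow_mult. pose proof (pos_INR N).
    assert (0 <= (x^2)^N) by (apply pow_le; nra).
    split.
    + apply Rdiv_le_0_compat; lra.
    + unfold Rdiv. rewrite <- (Rmult_1_r ((x^2)^N)) at 2. apply Rmult_le_compat_l; [lra|].
      rewrite <- Rinv_1. apply Rinv_le_contravar; lra.
  - apply is_lim_seq_const.
  - exact Hg.
Qed.

Definition fval (x : R) : R := / 2 * ((x + / x) * (- ln (1 - x) - - ln (1 + x)) / 2 - (- ln (1 - x) + - ln (1 + x)) + 0 - 1).

Lemma Ps_lim : forall x, x <> 0 -> Rabs x < 1 -> is_lim_seq (Ps x) (fval x).
Proof.
  intros x Hx0 Hx.
  apply is_lim_seq_ext with (u := fun N => / 2 * ((x + / x) * (Ls (2*N) x - Ls (2*N) (-x)) / 2 - (Ls (2*N) x + Ls (2*N) (-x))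
                  + x^(2*N) / (2 * INR N + 1) - 1)).
  { intros N. symmetry. apply Ps_eq. exact Hx0. }
  apply comb_lim.
  - apply Ls_lim. exact Hx.
  - replace (1 + x) with (1 - - x) by ring. apply Ls_lim. rewrite Rabs_Ropp. exact Hx.
  - apply w_lim. exact Hx.
Qed.

Lemma gen_sum : forall (A B x y : R) (t : nat -> R),
  (forall n, t n = A * (x^(2*S n)/cden (S n)) + B * (y^(2*S n)/cden (S n))) ->
  forall N, sum_n t N = A * Ps x (S N) + B * Ps y (S N).
Proof.
  intros A B x y t Ht N. induction N as [|N IH].
  - rewrite sum_O. change (t 0%nat = A * Ps x 1 + B * Ps y 1). rewrite Ht. cbn [Ps]. ring.
  - rewrite sum_Sn, IH. change ((A * Ps x (S N) + B * Ps y (S N)) + t (S N) = A * Ps x (S (S N)) + B * Ps y (S (S N))).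
    rewrite Ht. cbn [Ps]. ring.
Qed.

Lemma gen_series : forall (A B x y : R) (t : nat -> R),
  x <> 0 -> Rabs x < 1 -> y <> 0 -> Rabs y < 1 ->
  (forall n, t n = A * (x^(2*S n)/cden (S n)) + B * (y^(2*S n)/cden (S n))) ->
  is_series t (A * fval x + B * fval y).
Proof.
  intros A B x y t Hx Hx1 Hy Hy1 Ht.
  assert (H : is_lim_seq (sum_n t) (A * fval x + B * fval y)).
  { apply is_lim_seq_ext with (u := fun N => A * Ps x (S N) + B * Ps y (S N)).
    { intros N. symmetry. apply gen_sum. exact Ht. }
    apply is_lim_seq_plus'; apply sl.
    - apply (is_lim_seq_incr_1 (Ps x)). apply Ps_lim; assumption.
    - apply (is_lim_seq_incr_1 (Ps y)). apply Ps_lim; assumption. }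
  exact H.
Qed.

Lemma r_facts : sqrt 5 * sqrt 5 = 5 /\ 2 < sqrt 5 < 3.
Proof.
  assert (H : sqrt 5 * sqrt 5 = 5) by (apply sqrt_sqrt; lra).
  pose proof (sqrt_pos 5). split; [exact H|]. split; nra.
Qed.

Lemma alpha_pos : 0 < alpha.
Proof. unfold alpha. pose proof r_facts. lra. Qed.
Lemma beta_neg : beta < 0.
Proof. unfold beta. pose proof r_facts. lra. Qed.

Lemma den_eq : forall k, den k = 4 ^ k * cden k.
Proof. intros k. reflexivity. Qed.

Lemma cden_nz : forall k, (1 <= k)%nat -> cden k <> 0.
Proof.
  intros k Hk. unfold cden. apply le_INR in Hk. simpl in Hk.
  assert (0 < (2 * INR k - 1) * (2 * INR k) * (2 * INR k + 1)).
  { apply Rmult_lt_0_compat; [apply Rmult_lt_0_compat|]; lra. }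
  lra.
Qed.

Lemma pow_half : forall (a : R) k, (a / 2) ^ (2 * k) = a ^ (2 * k) / 4 ^ k.
Proof.
  intros a k. unfold Rdiv. rewrite Rpow_mult_distr. f_equal.
  rewrite pow_mult. rewrite <- pow_inv. f_equal. field.
Qed.

Lemma powZ_term : forall (a : R) (s : Z) (k : nat), a <> 0 ->
  powerRZ a (2 * Z.of_nat k + s) = a ^ (2 * k) * powerRZ a s.
Proof.
  intros a s k Ha. rewrite powerRZ_add by exact Ha. f_equal.
  rewrite pow_powerRZ. f_equal. lia.
Qed.

Lemma alpha_nz : alpha <> 0.
Proof. pose proof alpha_pos. lra. Qed.
Lemma beta_nz : beta <> 0.
Proof. pose proof beta_neg. lra. Qed.
Lemma ab_nz : alpha - beta <> 0.
Proof. pose proof alpha_pos. pose proof beta_neg. lra. Qed.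

Lemma x_facts : alpha / 2 <> 0 /\ Rabs (alpha / 2) < 1 /\ beta / 2 <> 0 /\ Rabs (beta / 2) < 1.
Proof.
  pose proof r_facts. unfold alpha, beta.
  repeat split; try (apply Rabs_def1); lra.
Qed.

Lemma luc_series : forall s : Z,
  is_series (fun n : nat => Luc (2 * Z.of_nat (S n) + s) / den (S n))
    (powerRZ alpha s * fval (alpha / 2) + powerRZ beta s * fval (beta / 2)).
Proof.
  intros s. destruct x_facts as [H1 [H2 [H3 H4]]].
  apply gen_series; try assumption.
  intros n. unfold Luc. rewrite !powZ_term by (apply alpha_nz || apply beta_nz).
  rewrite den_eq, !pow_half.
  pose proof (cden_nz (S n) ltac:(lia)). pose proof (pow_nonzero 4 (S n) ltac:(lra)).
  field. split; assumption.
Qed.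

Lemma fib_series : forall s : Z,
  is_series (fun n : nat => Fib (2 * Z.of_nat (S n) + s) / den (S n))
    ((powerRZ alpha s / (alpha - beta)) * fval (alpha / 2) + (- powerRZ beta s / (alpha - beta)) * fval (beta / 2)).
Proof.
  intros s. destruct x_facts as [H1 [H2 [H3 H4]]].
  apply gen_series; try assumption.
  intros n. unfold Fib. rewrite !powZ_term by (apply alpha_nz || apply beta_nz).
  rewrite den_eq, !pow_half.
  pose proof (cden_nz (S n) ltac:(lia)). pose proof (pow_nonzero 4 (S n) ltac:(lra)).
  pose proof ab_nz.
  field. repeat split; assumption.
Qed.

Lemma ln_prod : forall a b c, 0 < a -> 0 < b -> a * b = c -> ln a + ln b = ln c.
Proof. intros a b c Ha Hb <-. rewrite ln_mult; auto. Qed.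

Ltac alg := let H := fresh in pose proof (proj1 r_facts) as H; unfold alpha, beta;
  field_simplify_eq; [cbn [pow]; nsatz | ..]; pose proof (proj2 r_facts); try lra.

Lemma ln5 : ln 5 = 2 * ln (sqrt 5).
Proof. pose proof r_facts as [Hr [Hr1 Hr2]]. rewrite <- (ln_prod (sqrt 5) (sqrt 5) 5); lra. Qed.

Lemma L1 : ln (1 - alpha / 2) = - ln 2 - 2 * ln alpha.
Proof.
  pose proof alpha_pos. pose proof r_facts as [Hr [Hr1 Hr2]].
  assert (P : 0 < 1 - alpha / 2) by (unfold alpha; lra).
  assert (E : ln 2 + ln (alpha * alpha) + ln (1 - alpha / 2) = 0).
  { rewrite (ln_prod 2 (alpha*alpha) (2*(alpha*alpha))); try lra; [|nra]. rewrite (ln_prod _ _ 1); [apply ln_1|nra|lra|]. alg. }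
  rewrite ln_mult in E by lra. lra.
Qed.

Lemma L2 : ln (1 + alpha / 2) = ln 5 / 2 + ln alpha - ln 2.
Proof.
  pose proof alpha_pos. pose proof r_facts as [Hr [Hr1 Hr2]].
  assert (P : 0 < 1 + alpha / 2) by (unfold alpha; lra).
  assert (E : ln 2 + ln (1 + alpha / 2) = ln (sqrt 5) + ln alpha).
  { rewrite (ln_prod 2 _ (2 * (1 + alpha / 2))) by lra. symmetry. apply ln_prod; try lra. clear Hr. alg. }
  rewrite ln5. lra.
Qed.

Lemma L3 : ln (1 - beta / 2) = 2 * ln alpha - ln 2.
Proof.
  pose proof alpha_pos. pose proof r_facts as [Hr [Hr1 Hr2]].
  assert (P : 0 < 1 - beta / 2) by (unfold beta; lra).
  assert (E : ln 2 + ln (1 - beta / 2) = ln alpha + ln alpha).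
  { rewrite (ln_prod 2 _ (2 * (1 - beta / 2))) by lra. symmetry. apply ln_prod; try lra. clear Hr. alg. }
  lra.
Qed.

Lemma L4 : ln (1 + beta / 2) = ln 5 / 2 - ln alpha - ln 2.
Proof.
  pose proof alpha_pos. pose proof r_facts as [Hr [Hr1 Hr2]].
  assert (P : 0 < 1 + beta / 2) by (unfold beta; lra).
  assert (E : ln 2 + ln alpha + ln (1 + beta / 2) = ln (sqrt 5)).
  { rewrite (ln_prod 2 _ (2 * alpha)) by lra. rewrite (ln_prod _ _ (2 * alpha * (1 + beta / 2))) by nra. f_equal. clear Hr. alg. }
  rewrite ln5. lra.
Qed.

Lemma pz_p1 : forall a s, a <> 0 -> powerRZ a (s + 1) = powerRZ a s * a.
Proof. intros a s Ha. rewrite powerRZ_add by exact Ha. simpl. ring. Qed.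
Lemma pz_m1 : forall a s, a <> 0 -> powerRZ a (s - 1) = powerRZ a s * / a.
Proof. intros a s Ha. replace (s - 1)%Z with (s + -1)%Z by lia. rewrite powerRZ_add by exact Ha. simpl. field. exact Ha. Qed.

Theorem theorem13 : forall s : Z,
  is_series (fun n : nat => Luc (2 * Z.of_nat (S n) + s) / den (S n))
    (- Luc s * ln 2 + 5 / 16 * Luc (s + 1) * ln 5
     + sqrt 5 / 8 * (15 * Fib (s - 1) - Fib s) * ln alpha - Luc s / 2)
  /\
  is_series (fun n : nat => Fib (2 * Z.of_nat (S n) + s) / den (S n))
    (- Fib s * ln 2 + 5 / 16 * Fib (s + 1) * ln 5
     + 1 / (8 * sqrt 5) * (15 * Luc (s - 1) - Luc s) * ln alpha - Fib s / 2).
Proof.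
  intros s. pose proof alpha_pos. pose proof beta_neg.
  split.
  - match goal with |- is_series _ ?l => replace l with (powerRZ alpha s * fval (alpha / 2) + powerRZ beta s * fval (beta / 2)) end.
    { apply luc_series. }
    unfold fval, Luc, Fib. rewrite L1, L2, L3, L4.
    rewrite !pz_p1, !pz_m1 by lra.
    set (A := powerRZ alpha s). set (B := powerRZ beta s).
    set (la := ln alpha). set (l2 := ln 2). set (l5 := ln 5).
    pose proof (proj1 r_facts) as Hr. pose proof (proj2 r_facts).
    unfold alpha, beta. field_simplify_eq; [cbn [pow]; clear -Hr; clearbody A B la l2 l5; generalize dependent (sqrt 5); intros r Hr; nsatz | ..]; lra.
  - match goal with |- is_series _ ?l => replace l with ((powerRZ alpha s / (alpha - beta)) * fval (alpha / 2) + (- powerRZ beta s / (alpha - beta)) * fval (beta / 2)) end.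
    { apply fib_series. }
    unfold fval, Luc, Fib. rewrite L1, L2, L3, L4.
    rewrite !pz_p1, !pz_m1 by lra.
    set (A := powerRZ alpha s). set (B := powerRZ beta s).
    set (la := ln alpha). set (l2 := ln 2). set (l5 := ln 5).
    pose proof (proj1 r_facts) as Hr. pose proof (proj2 r_facts).
    unfold alpha, beta. field_simplify_eq; [cbn [pow]; clear -Hr; clearbody A B la l2 l5; generalize dependent (sqrt 5); intros r Hr; nsatz | ..]; lra.
Qed.
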